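(* We have \[ h(4,m) \geq m^2 + 9m - 3 \text{ for } m \geq 3,\qquad h(8,m) \geq m^2 + 19m - 11 \text{ for } m \geq 4,\qquad h(16,m) \geq m^2 + 33m - 17 \text{ for } m \geq 10. \]
   Context: For a real matrix $A \in \mathbb{R}^{m\times n}$ and $1 \le k \le \min\{m,n\}$, let $\Delta_k(A)$ denote the maximum of $|\det(B)|$ over all $k\times k$ submatrices $B$ of $A$. The generalized Heller constant $h(\Delta,m)$ (for $\Delta, m \in \mathbb{Z}_{>0}$) is the maximum $n \in \mathbb{Z}_{>0}$ such that there exists an integer matrix $A \in \mathbb{Z}^{m\times n}$ with pairwise distinct columns and $\Delta_m(A) = \Delta$. *)

(* Defs.v *)
From mathcomp Require Import all_boot all_order all_algebra.
Set Implicit Arguments. Unset Strict Implicit. Unset Printing Implicit Defensive.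
Import Order.TTheory GRing.Theory Num.Theory.
Local Open Scope ring_scope.

(* A k x k submatrix is given by an injective choice of k rows and k columns
   (ordering of rows/columns only affects the sign of det). *)
Definition Delta (m n k : nat) (A : 'M[int]_(m, n)) : nat :=
  (\max_(f : {ffun 'I_k -> 'I_m} | injectiveb f)
     \max_(g : {ffun 'I_k -> 'I_n} | injectiveb g)
        `|\det (mxsub f g A)|%N)%N.

Definition heller_attained (D m n : nat) : Prop :=
  exists A : 'M[int]_(m, n),
    (forall i j : 'I_n, col i A = col j A -> i = j) /\ Delta m A = D.

(* h(D, m) >= N, where h(D, m) is the maximum of the attained n
   (a maximum that exists, i.e. the set of attained n is finite). *)
Definition heller_ge (D m N : nat) : Prop :=
  exists n : nat, (N <= n)%N /\ heller_attained D m n.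

(* Main.v *)
Require Import Defs.
From mathcomp Require Import all_boot all_order all_algebra zify.
Set Implicit Arguments. Unset Strict Implicit. Unset Printing Implicit Defensive.
Import Order.TTheory GRing.Theory Num.Theory.
Local Open Scope ring_scope.

Definition bnd m (L : seq 'cV[int]_m) (D : nat) :=
  forall M : 'M[int]_m, (forall j, col j M \in L) -> (`|\det M|%N <= D)%N.
Definition attains m (L : seq 'cV[int]_m) (D : nat) :=
  exists M : 'M[int]_m, (forall j, col j M \in L) /\ `|\det M|%N = D.

Definition matL m (L : seq 'cV[int]_m) : 'M[int]_(m, size L) :=
  \matrix_(i, j) (nth 0 L j) i 0.

Lemma col_matL m (L : seq 'cV[int]_m) (j : 'I_(size L)) : col j (matL L) = nth 0 L j.
Proof. by apply/matrixP => i k; rewrite !mxE ord1. Qed.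

Lemma det_mxsub_perm m n (A : 'M[int]_(m, n)) (f : {ffun 'I_m -> 'I_m})
  (g : {ffun 'I_m -> 'I_n}) :
  injectiveb f -> `|\det (mxsub f g A)|%N = `|\det (colsub g A)|%N.
Proof.
move/injectiveP => finj.
have -> : mxsub f g A = row_perm (perm.perm finj) (colsub g A).
  by apply/matrixP => i j; rewrite !mxE perm.permE.
by rewrite row_permE det_mulmx det_perm abszMsign.
Qed.

Lemma Delta_le m (L : seq 'cV[int]_m) D : bnd L D -> (Delta m (matL L) <= D)%N.
Proof.
move=> hb; apply/bigmax_leqP => f finj; apply/bigmax_leqP => g ginj.
rewrite det_mxsub_perm //; apply: hb => j.
by rewrite col_colsub col_matL mem_nth.
Qed.

Lemma Delta_ge m (L : seq 'cV[int]_m) D : attains L D -> (D <= Delta m (matL L))%N.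
Proof.
case=> M [hM <-].
case: (eqVneq (\det M) 0) => [->|dM]; first by rewrite absz0.
have hidx j : (index (col j M) L < size L)%N by rewrite index_mem.
pose g : {ffun 'I_m -> 'I_(size L)} := [ffun j => Ordinal (hidx j)].
pose f : {ffun 'I_m -> 'I_m} := [ffun i => i].
have finj : injectiveb f by apply/injectiveP => i j; rewrite !ffunE.
have ginj : injectiveb g.
  apply/injectiveP => j1 j2; rewrite !ffunE => -[] /(congr1 (nth 0 L)).
  rewrite !nth_index // => eqc.
  case: (eqVneq j1 j2) => // ne; exfalso; move/eqP: dM; apply.
  rewrite -det_tr; apply: (determinant_alternate ne) => k; rewrite !mxE.
  by have := congr1 (fun v : 'cV[int]_m => v k 0) eqc; rewrite !mxE.
have -> : M = mxsub f g (matL L).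
  by apply/matrixP => i j; rewrite !mxE !ffunE /= nth_index // mxE.
apply: leq_trans (leq_bigmax_cond _ finj).
exact: (leq_bigmax_cond _ ginj).
Qed.

Definition liftL m (L S : seq 'cV[int]_m) : seq 'cV[int]_(1 + m) :=
  [seq col_mx (0 : 'M_1) a | a <- L] ++ [seq col_mx (1 : 'M_1) (- s) | s <- S]
  ++ [seq col_mx (-1 : 'M_1) s | s <- S].
Definition liftS m (S : seq 'cV[int]_m) : seq 'cV[int]_(1 + m) :=
  [seq col_mx (0 : 'M_1) s | s <- S] ++ [:: col_mx (1 : 'M_1) 0].

Lemma liftLP m (L S : seq 'cV[int]_m) v : v \in liftL L S ->
  [\/ usubmx v = 0 /\ dsubmx v \in L, usubmx v = 1 /\ - dsubmx v \in S
    | usubmx v = -1 /\ dsubmx v \in S].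
Proof.
rewrite !mem_cat => /or3P [] /mapP [x hx ->]; rewrite col_mxKu col_mxKd.
- by constructor 1.
- by constructor 2; rewrite opprK.
- by constructor 3.
Qed.

Lemma lift_bnd0 m (L S : seq 'cV[int]_m) D :
  bnd L D -> (forall s t, s \in S -> t \in S -> s - t \in L) ->
  forall M : 'M[int]_(1 + m), (forall j, col j M \in liftL L S) -> M 0 0 != 0 ->
  (`|\det M|%N <= D)%N.
Proof.
move=> hb hd M hM h00.
have ea : ulsubmx M = usubmx (col 0 M).
  by apply/matrixP => i k; rewrite !mxE !ord1; congr (M _ _); apply/val_inj.
have ec : dlsubmx M = dsubmx (col 0 M).
  by apply/matrixP => i k; rewrite !mxE !ord1; congr (M _ _); apply/val_inj.
have eb j : col j (ursubmx M) = usubmx (col (rshift 1 j) M).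
  by apply/matrixP => i k; rewrite !mxE.
have ed j : col j (drsubmx M) = dsubmx (col (rshift 1 j) M).
  by apply/matrixP => i k; rewrite !mxE.
have hM0 := hM 0.
set a := ulsubmx M; set b := ursubmx M; set c := dlsubmx M; set d := drsubmx M.
have hac : (a = 1 /\ - c \in S) \/ (a = -1 /\ c \in S).
  rewrite /a /c ea ec; case/liftLP: hM0 => -[h1 h2]; [|by left|by right].
  have e00 : M 0 0 = usubmx (col 0 M) 0 0 by rewrite !mxE; congr (M _ _); apply/val_inj.
  by move: h00; rewrite e00 h1 mxE eqxx.
have a2 : a *m a = 1 by case: hac => -[-> _]; rewrite ?mulmx1 ?mulNmx ?mulmxN ?opprK ?mul1mx.
have -> : M = block_mx a b c d by rewrite submxK.
set U : 'M[int]_(1 + m) := block_mx 1 (- (a *m b)) 0 1.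
have dU : \det U = 1 by rewrite det_ublock !det1 mulr1.
have : \det (block_mx a b c d) = \det (block_mx a 0 c (d - c *m (a *m b))).
  rewrite -[LHS]mulr1 -dU -det_mulmx mulmx_block.
  by rewrite !mulmx1 !mulmx0 !addr0 mulmxN (mulmxA a a b) a2 mul1mx addNr mulmxN addrC.
move=> ->; rewrite det_lblock abszM.
have -> : `|\det a|%N = 1%N.
  by case: hac => -[-> _]; rewrite det_mx11 ?mxE eqxx.
rewrite mul1n; apply: hb => j.
have -> : col j (d - c *m (a *m b)) = col j d - c *m (a *m col j b).
  by rewrite !colE mulmxBl !mulmxA.
rewrite /b /d eb ed.
set v := dsubmx (col (rshift 1 j) M).
case/liftLP: (hM (rshift 1 j)) => -[-> h2]; rewrite -/v in h2 *.
- by rewrite !mulmx0 subr0.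
- case: hac => -[-> hc']; rewrite ?mul1mx ?mulmxN ?mulNmx ?mulmx1 ?opprK.
  + have -> : v - c = - c - - v by rewrite opprK addrC.
    by apply: hd.
  + have -> : v - c *m -1 = c - - v by rewrite mulmxN mulmx1 !opprK addrC.
    by apply: hd.
- case: hac => -[-> hc'].
  + have -> : v - c *m (1 *m -1) = v - - c by rewrite mul1mx mulmxN mulmx1.
    by apply: hd.
  + have -> : v - c *m (-1 *m -1) = v - c by rewrite !(mulmxN, mulNmx, mulmx1, mul1mx, opprK).
    by apply: hd.
Qed.

Lemma lift_bnd m (L S : seq 'cV[int]_m) D :
  bnd L D -> (forall s t, s \in S -> t \in S -> s - t \in L) -> bnd (liftL L S) D.
Proof.
move=> hb hd M hM.
case: (pickP (fun j => M 0 j != 0)) => [j0 hj0 | hz]; last first.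
  rewrite (expand_det_row _ 0) big1 ?absz0 // => j _.
  by move/negbFE/eqP: (hz j) ->; rewrite mul0r.
pose M1 := xcol 0 j0 M.
have -> : `|\det M|%N = `|\det M1|%N.
  by rewrite /M1 xcolE det_mulmx /tperm_mx det_perm mulrC abszMsign.
apply: (lift_bnd0 hb hd).
  by move=> j; rewrite /M1 xcolEsub col_colsub.
by rewrite /M1 !mxE perm.tpermL.
Qed.

Lemma lift_att m (L S : seq 'cV[int]_m) D :
  S != [::] -> attains L D -> attains (liftL L S) D.
Proof.
case: S => // s0 S' _ [M [hM hD]].
exists (block_mx 1 0 (- s0) M : 'M_(1 + m)); split; last by rewrite det_lblock det1 mul1r.
move=> j; rewrite block_mxEh; case: (split_ordP j) => k ->.
- rewrite -col_lsubmx row_mxKl col_id !mem_cat; apply/or3P; constructor 2.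
  by apply/mapP; exists s0; rewrite ?mem_head ?opprK.
- rewrite -col_rsubmx row_mxKr col_col_mx col0 !mem_cat; apply/or3P; constructor 1.
  by apply/mapP; exists (col k M).
Qed.

Definition hinv D m (L S : seq 'cV[int]_m) :=
  [/\ uniq L, uniq S, S != [::], (forall s t, s \in S -> t \in S -> s - t \in L)
      & bnd L D /\ attains L D].

Lemma disj (T U : eqType) (top : T -> U) (l1 l2 : seq T) u1 u2 : u1 != u2 ->
  {in l1, forall x, top x = u1} -> {in l2, forall x, top x = u2} -> ~~ has (mem l1) l2.
Proof.
move=> ne h1 h2; apply/hasPn => x x2; apply/negP => x1.
by move: ne; rewrite -(h1 x x1) -(h2 x x2) eqxx.
Qed.

Lemma top_map m (x : 'M[int]_1) (f : 'cV[int]_m -> 'cV[int]_m) l :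
  {in [seq col_mx x (f y) | y <- l], forall v : 'cV[int]_(1 + m), usubmx v = x}.
Proof. by move=> v /mapP [y _ ->]; rewrite col_mxKu. Qed.

Lemma top_map0 m (x : 'M[int]_1) l :
  {in [seq col_mx x y | y <- l], forall v : 'cV[int]_(1 + m), usubmx v = x}.
Proof. by move=> v /mapP [y _ ->]; rewrite col_mxKu. Qed.

Lemma ne01 : (0 : 'M[int]_1) != 1.
Proof. by apply/eqP => /(congr1 (fun x : 'M[int]_1 => x 0 0)); rewrite !mxE. Qed.
Lemma ne0N1 : (0 : 'M[int]_1) != -1.
Proof. by apply/eqP => /(congr1 (fun x : 'M[int]_1 => x 0 0)); rewrite !mxE. Qed.
Lemma ne1N1 : (1 : 'M[int]_1) != -1.
Proof. by apply/eqP => /(congr1 (fun x : 'M[int]_1 => x 0 0)); rewrite !mxE. Qed.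

Lemma col_mx_inj m (x : 'M[int]_1) : injective (fun y : 'cV[int]_m => col_mx x y).
Proof. by move=> y z /eq_col_mx []. Qed.

Lemma sub_col m (a c : 'M[int]_1) (b d : 'cV[int]_m) :
  col_mx a b - col_mx c d = col_mx (a - c) (b - d).
Proof. by rewrite opp_col_mx add_col_mx. Qed.

Lemma lift_inv D m (L S : seq 'cV[int]_m) :
  hinv D L S -> hinv D (liftL L S) (liftS S).
Proof.
case=> uL uS nS hd [hb ha]; split; last split.
- rewrite /liftL !cat_uniq !map_inj_uniq //; last 3 first.
  + exact: col_mx_inj.
  + by move=> y z /col_mx_inj /oppr_inj.
  + exact: col_mx_inj.
  rewrite uL uS has_cat negb_or.
  rewrite (disj ne01 (@top_map0 _ _ _) (@top_map _ _ _ _)).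
  rewrite (disj ne0N1 (@top_map0 _ _ _) (@top_map0 _ _ _)).
  by rewrite (disj ne1N1 (@top_map _ _ _ _) (@top_map0 _ _ _)).
- rewrite /liftS cat_uniq map_inj_uniq; last exact: col_mx_inj.
  rewrite uS /= orbF andbT; apply/mapP => -[y _] /eq_col_mx [] /eqP.
  by rewrite eq_sym (negbTE ne01).
- by rewrite /liftS; case: (S).
- have [s0 hs0] : exists s0, s0 \in S.
    by case: (S) nS => // s0 ? _; exists s0; rewrite mem_head.
  have h0 : 0 \in L by rewrite -(subrr s0) hd.
  move=> s t; rewrite /liftS !mem_cat !mem_seq1 /liftL.
  case/orP => [/mapP [s' hs ->]|/eqP ->]; case/orP => [/mapP [t' ht ->]|/eqP ->];
    rewrite sub_col.
  + by rewrite subrr; apply/or3P; constructor 1; apply: (map_f (fun a => col_mx 0 a)); apply: hd.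
  + by rewrite sub0r subr0; apply/or3P; constructor 3; apply: (map_f (fun a => col_mx (-1) a)).
  + by rewrite subr0 sub0r; apply/or3P; constructor 2; apply: (map_f (fun a => col_mx 1 (- a))).
  + by rewrite !subrr; apply/or3P; constructor 1; apply: (map_f (fun a => col_mx 0 a)).
- exact: lift_bnd.
- exact: lift_att.
Qed.

Lemma inv_attained D m (L S : seq 'cV[int]_m) : hinv D L S -> heller_attained D m (size L).
Proof.
case=> uL _ _ _ [hb ha]; exists (matL L); split.
- by move=> i j; rewrite !col_matL => /eqP; rewrite nth_uniq // => /eqP /val_inj.
- by apply/eqP; rewrite eqn_leq Delta_le // Delta_ge.
Qed.

Lemma iter_inv D k (L0 S0 : seq 'cV[int]_k) : hinv D L0 S0 -> forall j,
  exists L S : seq 'cV[int]_(j + k), hinv D L S /\ size S = (size S0 + j)%N /\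
    (size L + j = size L0 + 2 * j * size S0 + j * j)%N.
Proof.
move=> h0; elim=> [|j [L [S [h [hS hL]]]]]; first by exists L0, S0; split => //; split; [rewrite addn0 | rewrite !muln0 !mul0n !addn0].
exists (liftL L S), (liftS S); split; first exact: lift_inv.
rewrite /liftL /liftS !size_cat !size_map /= hS; split; first by rewrite addn1 addnS.
nia.
Qed.

Lemma det2 (M : 'M[int]_2) : \det M = M 0 0 * M 1 1 - M 0 1 * M 1 0.
Proof.
rewrite (expand_det_row _ 0) !big_ord_recl big_ord0 /cofactor !det_mx11 !mxE /=.
rewrite expr0 expr1 mul1r addr0 mulN1r mulrN.
by congr (M _ _ * M _ _ - M _ _ * M _ _); apply/val_inj.
Qed.

Definition vec2 (p : int * int) : 'cV[int]_2 :=
  \col_i (if (i : nat) == 0%N then p.1 else p.2).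
Lemma vec2_inj : injective vec2.
Proof.
move=> [a b] [c d] /matrixP h; have := h 0 0; have := h 1 0; rewrite !mxE /=.
by move=> -> ->.
Qed.
Definition sub2 (p q : int * int) := (p.1 - q.1, p.2 - q.2).
Lemma vec2_sub p q : vec2 (sub2 p q) = vec2 p - vec2 q.
Proof. by apply/matrixP => i j; rewrite !mxE; case: ifP. Qed.
Definition f2 (p q : int * int) := p.1 * q.2 - q.1 * p.2.
Definition LP2 (TP : seq (int * int)) := undup [seq sub2 p q | p <- TP, q <- TP].

Lemma det_vec2 (M : 'M[int]_2) p q : col 0 M = vec2 p -> col 1 M = vec2 q ->
  \det M = f2 p q.
Proof.
move=> hp hq; rewrite det2.
have e i j : M i j = col j M i 0 by rewrite mxE.
by rewrite (e 0 0) (e 1 0) (e 0 1) (e 1 1) hp hq !mxE /= /f2.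
Qed.

Lemma base2 D (TP : seq (int * int)) :
  uniq TP -> TP != [::] ->
  (let L := LP2 TP in all (fun p => all (fun q => `|f2 p q|%N <= D)%N L) L) ->
  (let L := LP2 TP in has (fun p => has (fun q => `|f2 p q|%N == D) L) L) ->
  hinv D (map vec2 (LP2 TP)) (map vec2 TP).
Proof.
move=> uT nT /= hall hhas; split.
- by rewrite (map_inj_uniq vec2_inj) undup_uniq.
- by rewrite (map_inj_uniq vec2_inj).
- by case: (TP) nT.
- move=> s t /mapP [p hp ->] /mapP [q hq ->]; rewrite -vec2_sub map_f //.
  by rewrite mem_undup; apply: allpairs_f.
split.
- move=> M hM.
  case/mapP: (hM 0) => p hp ep; case/mapP: (hM 1) => q hq eq.
  rewrite (det_vec2 ep eq).
  by move/allP: hall => /(_ p hp) /allP /(_ q hq).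
- case/hasP: hhas => p hp /hasP [q hq /eqP hD].
  exists (\matrix_(i, j) (if (j : nat) == 0%N then vec2 p else vec2 q) i 0).
  have c0 : col 0 (\matrix_(i, j) (if (j : nat) == 0%N then vec2 p else vec2 q) i 0 : 'M[int]_2) = vec2 p.
    by apply/matrixP => i k; rewrite !mxE.
  have c1 : col 1 (\matrix_(i, j) (if (j : nat) == 0%N then vec2 p else vec2 q) i 0 : 'M[int]_2) = vec2 q.
    by apply/matrixP => i k; rewrite !mxE.
  split; last by rewrite (det_vec2 c0 c1).
  move=> j; have [->|->] : j = 0 \/ j = 1.
    by case: j => -[|[|]] // ? ; [left|right]; apply/val_inj.
  + by rewrite c0 map_f.
  + by rewrite c1 map_f.
Qed.

Definition TP4 : seq (int * int) := [:: (0,0);(1,0);(0,1);(1,1);(1,2);(2,1);(2,2)].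
Lemma base4 : hinv 4 (map vec2 (LP2 TP4)) (map vec2 TP4).
Proof. apply: base2; vm_compute; reflexivity. Qed.
Lemma size4 : (size (map vec2 (LP2 TP4)) = 19 /\ size (map vec2 TP4) = 7)%N.
Proof. by rewrite !size_map; split; vm_compute. Qed.

Definition TP16 : seq (int * int) := [:: (-4, -2); (-4, -1); (-4, 0); (-3, -2); (-3, -1); (-3, 0); (-3, 1); (-2, -2); (-2, -1); (-2, 0); (-2, 1); (-2, 2); (-1, -1); (-1, 0); (-1, 1); (-1, 2); (0, 0); (0, 1); (0, 2)].
Lemma base16 : hinv 16 (map vec2 (LP2 TP16)) (map vec2 TP16).
Proof. apply: base2; vm_compute; reflexivity. Qed.
Lemma size16 : (size (map vec2 (LP2 TP16)) = 61 /\ size (map vec2 TP16) = 19)%N.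
Proof. by rewrite !size_map; split; vm_compute. Qed.

Lemma det3 (M : 'M[int]_3) : \det M = M 0 0 * (M 1 1 * M 2 2 - M 1 2 * M 2 1)
  - M 0 1 * (M 1 0 * M 2 2 - M 1 2 * M 2 0) + M 0 2 * (M 1 0 * M 2 1 - M 1 1 * M 2 0).
Proof.
rewrite (expand_det_row _ 0) !big_ord_recl big_ord0 /cofactor !det2 !mxE /=.
rewrite expr0 expr1 expr2 mul1r addr0 mulN1r mulrN mulrNN mul1r.
rewrite addrA.
by congr (M _ _ * (M _ _ * M _ _ - M _ _ * M _ _) - M _ _ * (M _ _ * M _ _ - M _ _ * M _ _) + M _ _ * (M _ _ * M _ _ - M _ _ * M _ _)); apply/val_inj.
Qed.

Definition vec3 (p : int * int * int) : 'cV[int]_3 :=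
  \col_i (if (i : nat) == 0%N then p.1.1 else if (i : nat) == 1%N then p.1.2 else p.2).
Lemma vec3_inj : injective vec3.
Proof.
move=> [[a b] c] [[d e] f] /matrixP h; have := h 0 0; have := h 1 0; have := h 2 0.
by rewrite !mxE /= => -> -> ->.
Qed.
Definition sub3 (p q : int * int * int) := (p.1.1 - q.1.1, p.1.2 - q.1.2, p.2 - q.2).
Lemma vec3_sub p q : vec3 (sub3 p q) = vec3 p - vec3 q.
Proof. by apply/matrixP => i j; rewrite !mxE; case: ifP => //; case: ifP. Qed.
Definition f3 (p q r : int * int * int) :=
  p.1.1 * (q.1.2 * r.2 - r.1.2 * q.2) - q.1.1 * (p.1.2 * r.2 - r.1.2 * p.2)
  + r.1.1 * (p.1.2 * q.2 - q.1.2 * p.2).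
Definition LP3 (TP : seq (int * int * int)) := undup [seq sub3 p q | p <- TP, q <- TP].

Lemma det_vec3 (M : 'M[int]_3) p q r : col 0 M = vec3 p -> col 1 M = vec3 q ->
  col 2 M = vec3 r -> \det M = f3 p q r.
Proof.
move=> hp hq hr; rewrite det3.
have e i j : M i j = col j M i 0 by rewrite mxE.
by rewrite (e 0 0) (e 1 0) (e 2 0) (e 0 1) (e 1 1) (e 2 1) (e 0 2) (e 1 2) (e 2 2)
  hp hq hr !mxE /= /f3.
Qed.

Lemma base3 D (TP : seq (int * int * int)) :
  uniq TP -> TP != [::] ->
  (let L := LP3 TP in all (fun p => all (fun q => all (fun r => `|f3 p q r|%N <= D)%N L) L) L) ->
  (let L := LP3 TP in has (fun p => has (fun q => has (fun r => `|f3 p q r|%N == D) L) L) L) ->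
  hinv D (map vec3 (LP3 TP)) (map vec3 TP).
Proof.
move=> uT nT /= hall hhas; split.
- by rewrite (map_inj_uniq vec3_inj) undup_uniq.
- by rewrite (map_inj_uniq vec3_inj).
- by case: (TP) nT.
- move=> s t /mapP [p hp ->] /mapP [q hq ->]; rewrite -vec3_sub map_f //.
  by rewrite mem_undup; apply: allpairs_f.
split.
- move=> M hM.
  case/mapP: (hM 0) => p hp ep; case/mapP: (hM 1) => q hq eq; case/mapP: (hM 2) => r hr er.
  rewrite (det_vec3 ep eq er).
  by move/allP: hall => /(_ p hp) /allP /(_ q hq) /allP /(_ r hr).
- case/hasP: hhas => p hp /hasP [q hq /hasP [r hr /eqP hD]].
  pose M : 'M[int]_3 := \matrix_(i, j) (if (j : nat) == 0%N then vec3 p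
     else if (j : nat) == 1%N then vec3 q else vec3 r) i 0.
  have c0 : col 0 M = vec3 p by apply/matrixP => i k; rewrite !mxE.
  have c1 : col 1 M = vec3 q by apply/matrixP => i k; rewrite !mxE.
  have c2 : col 2 M = vec3 r by apply/matrixP => i k; rewrite !mxE.
  exists M; split; last by rewrite (det_vec3 c0 c1 c2).
  move=> j; have [->|[->|->]] : j = 0 \/ j = 1 \/ j = 2.
    by case: j => -[|[|[|]]] // ? ; [left|right;left|right;right]; apply/val_inj.
  + by rewrite c0 map_f.
  + by rewrite c1 map_f.
  + by rewrite c2 map_f.
Qed.

Definition TP8 : seq (int * int * int) := [:: (0, 0, 0); (0, 0, 1); (0, 1, 0); (0, 1, 1); (1, -1, 1); (1, 0, 0); (1, 0, 1); (1, 0, 2); (1, 1, 1); (2, -1, 1); (2, -1, 2); (2, 0, 1); (2, 0, 2)].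
Lemma base8 : hinv 8 (map vec3 (LP3 TP8)) (map vec3 TP8).
Proof. apply: base3; vm_compute; reflexivity. Qed.
Lemma size8 : (size (map vec3 (LP3 TP8)) = 55 /\ size (map vec3 TP8) = 13)%N.
Proof. by rewrite !size_map; split; vm_compute. Qed.

Lemma final D k (L0 S0 : seq 'cV[int]_k) (h : hinv D L0 S0) m N : (k <= m)%N ->
  (N + (m - k) <= size L0 + 2 * (m - k) * size S0 + (m - k) * (m - k))%N -> heller_ge D m N.
Proof.
move=> km; have e : m = ((m - k) + k)%N by rewrite subnK.
move: (m - k)%N e => j -> hN.
have [L [S [hi [_ hL]]]] := iter_inv h j.
exists (size L); split; last exact: inv_attained hi.
lia.
Qed.

Theorem theorem1p3 :
  (forall m : nat, (3 <= m)%N -> heller_ge 4 m (m ^ 2 + 9 * m - 3)%N) /\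
  (forall m : nat, (4 <= m)%N -> heller_ge 8 m (m ^ 2 + 19 * m - 11)%N) /\
  (forall m : nat, (10 <= m)%N -> heller_ge 16 m (m ^ 2 + 33 * m - 17)%N).
Proof.
split; [|split] => m hm.
- apply: (final base4); first by apply: leq_trans hm.
  case: size4 => -> ->; nia.
- apply: (final base8); first by apply: leq_trans hm.
  case: size8 => -> ->; nia.
- apply: (final base16); first by apply: leq_trans hm.
  case: size16 => -> ->; nia.
Qed.
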